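(* Let $m\ge1$, let $(t_{i,j})$ be positive reals with $t_{i+m,j-m}=t_{i,j}$ and $t_{i+2,j+2}=t_{i,j}$, and let $T_{i,j,k}$ be the solution of the $T$-system with initial data $T_{i,j,(i+j+1\bmod2)}=t_{i,j}$. For $k\ge1$, $i+j+k\equiv0\pmod2$, let $L_{i,j,k}=\frac{T_{i+1,j,k}T_{i-1,j,k}}{T_{i,j,k+1}T_{i,j,k-1}}$ and $R_{i,j,k}=\frac{T_{i,j+1,k}T_{i,j-1,k}}{T_{i,j,k+1}T_{i,j,k-1}}$. Then for all such $(i,j,k)$, $$L_{i+2,j+2,k}=L_{i,j,k},\quad L_{i+m,j-m,k}=L_{i,j,k},\quad L_{i+1,j+1,k+2}=L_{i,j,k},$$ and the same three identities hold for $R$.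
   Context: The $T$-system is $T_{i,j,k+1}T_{i,j,k-1}=T_{i+1,j,k}T_{i-1,j,k}+T_{i,j+1,k}T_{i,j-1,k}$ for $k\ge1$, $i+j+k\equiv0\pmod2$, on points $(i,j,k)\in\mathbb{Z}^2\times\mathbb{Z}_{\ge0}$ with $i+j+k\equiv1\pmod2$. *)

(* Defs.v *)
From Stdlib Require Import Reals ZArith.
Open Scope R_scope.

(* T is a function on Z^3; only points (i,j,k) with k >= 0 and
   i+j+k odd are meaningful. *)

Definition initial_data (t : Z -> Z -> R) (T : Z -> Z -> Z -> R) : Prop :=
  forall i j : Z, T i j ((i + j + 1) mod 2)%Z = t i j.

Definition T_system (T : Z -> Z -> Z -> R) : Prop :=
  forall i j k : Z, (1 <= k)%Z -> ((i + j + k) mod 2 = 0)%Z ->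
    T i j (k + 1)%Z * T i j (k - 1)%Z =
      T (i + 1)%Z j k * T (i - 1)%Z j k + T i (j + 1)%Z k * T i (j - 1)%Z k.

Definition Lratio (T : Z -> Z -> Z -> R) (i j k : Z) : R :=
  (T (i + 1)%Z j k * T (i - 1)%Z j k) / (T i j (k + 1)%Z * T i j (k - 1)%Z).

Definition Rratio (T : Z -> Z -> Z -> R) (i j k : Z) : R :=
  (T i (j + 1)%Z k * T i (j - 1)%Z k) / (T i j (k + 1)%Z * T i j (k - 1)%Z).

(* Main.v *)
Require Import Defs.
From Stdlib Require Import Reals ZArith.
From Stdlib Require Import Lia Lra Psatz.
Open Scope R_scope.

Ltac par := Z.to_euclidean_division_equations; lia.

Lemma ln_div' x y : 0 < x -> 0 < y -> ln (x / y) = ln x - ln y.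
Proof. intros; unfold Rdiv; rewrite ln_mult, ln_Rinv; try lra.
  apply Rinv_0_lt_compat; lra. Qed.

Lemma ln_step a b a' b' : 0<a->0<b->0<a'->0<b'->
  ln a' - ln a = ln b' - ln b -> ln (a'+b') - ln (a+b) = ln a' - ln a.
Proof.
  intros. assert (E: b'/b = a'/a).
  { apply ln_inv; try (apply Rdiv_lt_0_compat; lra). rewrite !ln_div'; lra. }
  assert (E2: a'+b' = (a'/a)*(a+b)).
  { assert (E3: b' = (a'/a)*b) by (rewrite <- E; field; lra).
    rewrite E3; field; lra. }
  rewrite E2, ln_mult, ln_div'; try lra.
  apply Rdiv_lt_0_compat; lra.
Qed.

Definition g (U : Z -> Z -> Z -> R) i j k := ln (U (i+1)%Z (j+1)%Z (k+2)%Z) - ln (U i j k).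

Definition Hdef U k := forall i j : Z, ((i+j+k) mod 2 = 0)%Z ->
  g U (i+1)%Z j k + g U (i-1)%Z j k = g U i (j+1)%Z k + g U i (j-1)%Z k.

Definition Upos (U : Z -> Z -> Z -> R) := forall i j k, (-1 <= k)%Z -> ((i+j+k) mod 2 = 1)%Z -> 0 < U i j k.
Definition Usys (U : Z -> Z -> Z -> R) := forall i j k, (0 <= k)%Z -> ((i+j+k) mod 2 = 0)%Z ->
  U i j (k+1)%Z * U i j (k-1)%Z = U (i+1)%Z j k * U (i-1)%Z j k + U i (j+1)%Z k * U i (j-1)%Z k.

Ltac norm := rewrite ?Z.add_simpl_r, ?Z.sub_add in *.

Lemma Vlemma U (pos : Upos U) (sys : Usys U) k (hk : (0 <= k)%Z) (H : Hdef U k) i j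
  (c : ((i+j+k) mod 2 = 0)%Z) :
  g U i j (k+1) + g U i j (k-1) = g U (i+1) j k + g U (i-1) j k.
Proof.
  pose proof (H i j c) as Hc. unfold g in *.
  pose proof (sys i j k hk c) as e1.
  pose proof (sys (i+1)%Z (j+1)%Z (k+2)%Z ltac:(lia) ltac:(par)) as e2.
  replace (k+1+2)%Z with (k+2+1)%Z by ring.
  replace (k-1+2)%Z with (k+2-1)%Z by ring.
  norm.
  assert (P: forall a b c, (-1 <= c)%Z -> ((a+b+c) mod 2 = 1)%Z -> 0 < U a b c) by exact pos.
  assert (ln (U (i+1)%Z (j+1)%Z (k+2+1)%Z * U (i+1)%Z (j+1)%Z (k+2-1)%Z) - ln (U i j (k+1)%Z * U i j (k-1)%Z)
    = ln (U (i+1+1)%Z (j+1)%Z (k+2)%Z * U i (j+1)%Z (k+2)%Z) - ln (U (i+1)%Z j k * U (i-1)%Z j k)) as K.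
  { rewrite e1, e2. apply ln_step; try (apply Rmult_lt_0_compat; apply P; par).
    rewrite !ln_mult; try (apply P; par). lra. }
  rewrite !ln_mult in K; try (apply P; par). lra.
Qed.

Lemma Step U (pos : Upos U) (sys : Usys U) k (hk : (0 <= k)%Z)
  (Hm : Hdef U (k-1)) (H : Hdef U k) : Hdef U (k+1).
Proof.
  intros i j c.
  pose proof (Vlemma U pos sys k hk H (i+1) j ltac:(par)) as V1.
  pose proof (Vlemma U pos sys k hk H (i-1) j ltac:(par)) as V2.
  pose proof (Vlemma U pos sys k hk H i (j+1) ltac:(par)) as V3.
  pose proof (Vlemma U pos sys k hk H i (j-1) ltac:(par)) as V4.
  pose proof (Hm i j ltac:(par)) as H0.
  pose proof (H (i+1)%Z j ltac:(par)) as Ha.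
  pose proof (H (i-1)%Z j ltac:(par)) as Hb.
  pose proof (H i (j+1)%Z ltac:(par)) as Hc.
  pose proof (H i (j-1)%Z ltac:(par)) as Hd.
  norm. lra.
Qed.

Lemma Lgen U (pos : Upos U) (sys : Usys U) k (hk : (0 <= k)%Z) (H : Hdef U k) i j
  (c : ((i+j+k) mod 2 = 0)%Z) :
  (U (i+1+1)%Z (j+1)%Z (k+2)%Z * U (i+1-1)%Z (j+1)%Z (k+2)%Z / (U (i+1)%Z (j+1)%Z (k+2+1)%Z * U (i+1)%Z (j+1)%Z (k+2-1)%Z)
   = U (i+1)%Z j k * U (i-1)%Z j k / (U i j (k+1)%Z * U i j (k-1)%Z)) /\
  (U (i+1)%Z (j+1+1)%Z (k+2)%Z * U (i+1)%Z (j+1-1)%Z (k+2)%Z / (U (i+1)%Z (j+1)%Z (k+2+1)%Z * U (i+1)%Z (j+1)%Z (k+2-1)%Z)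
   = U i (j+1)%Z k * U i (j-1)%Z k / (U i j (k+1)%Z * U i j (k-1)%Z)).
Proof.
  pose proof (Vlemma U pos sys k hk H i j c) as V.
  pose proof (H i j c) as Hc. unfold g in *.
  replace (k+1+2)%Z with (k+2+1)%Z in V by ring.
  replace (k-1+2)%Z with (k+2-1)%Z in V by ring.
  norm.
  assert (P: forall a b c, (-1 <= c)%Z -> ((a+b+c) mod 2 = 1)%Z -> 0 < U a b c) by exact pos.
  split; apply ln_inv;
    try (apply Rdiv_lt_0_compat; apply Rmult_lt_0_compat; apply P; par);
    rewrite !ln_div', !ln_mult; try (apply Rmult_lt_0_compat); try (apply P; par); lra.
Qed.

Lemma Hall U (pos : Upos U) (sys : Usys U) (Hm1 : Hdef U (-1)) (H0 : Hdef U 0) :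
  forall k, (-1 <= k)%Z -> Hdef U k.
Proof.
  assert (A: forall n : nat, Hdef U (Z.of_nat n - 1) /\ Hdef U (Z.of_nat n)).
  { induction n as [|n [IH1 IH2]]. { simpl. split; assumption. }
    rewrite Nat2Z.inj_succ. unfold Z.succ. rewrite Z.add_simpl_r. split; [assumption|].
    apply Step; auto. lia. }
  intros k hk. destruct (Z.eq_dec k (-1)) as [->|ne]; [assumption|].
  replace k with (Z.of_nat (Z.to_nat k)) by lia. apply A.
Qed.

Definition Te (T : Z -> Z -> Z -> R) (i j k : Z) : R :=
  if Z.eqb k (-1) then (T (i+1)%Z j 0%Z * T (i-1)%Z j 0%Z + T i (j+1)%Z 0%Z * T i (j-1)%Z 0%Z) / T i j 1%Z
  else T i j k.

Lemma Te_eq T i j k : k <> (-1)%Z -> Te T i j k = T i j k.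
Proof. intros h; unfold Te. destruct (Z.eqb_spec k (-1)); [lia|reflexivity]. Qed.

Definition Nf (t : Z -> Z -> R) a b := t (a+1)%Z b * t (a-1)%Z b + t a (b+1)%Z * t a (b-1)%Z.
Definition pf t a b := ln (Nf t a b) - ln (t a b) - ln (t (a+1)%Z (b+1)%Z).


Lemma lvl0 t T (hinit : initial_data t T) a b : ((a+b) mod 2 = 1)%Z -> T a b 0%Z = t a b.
Proof. intros h. rewrite <- (hinit a b). f_equal. par. Qed.
Lemma lvl1 t T (hinit : initial_data t T) a b : ((a+b) mod 2 = 0)%Z -> T a b 1%Z = t a b.
Proof. intros h. rewrite <- (hinit a b). f_equal. par. Qed.

Lemma Tpos t T (htpos : forall i j, 0 < t i j) (hinit : initial_data t T) (hsys : T_system T) :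
  forall k, (0 <= k)%Z -> forall i j, ((i+j+k) mod 2 = 1)%Z -> 0 < T i j k.
Proof.
  set (P := fun k => forall i j, ((i+j+k) mod 2 = 1)%Z -> 0 < T i j k).
  assert (A : forall n : nat, P (Z.of_nat n) /\ P (Z.of_nat n + 1)%Z).
  { induction n as [|n [IH1 IH2]].
    - simpl. split; intros i j h.
      + rewrite (lvl0 t T hinit) by par. auto.
      + rewrite (lvl1 t T hinit) by par. auto.
    - rewrite Nat2Z.inj_succ. unfold Z.succ. split; [assumption|].
      intros i j h. set (k := Z.of_nat n) in *.
      pose proof (hsys i j (k+1)%Z ltac:(lia) ltac:(par)) as e.
      rewrite Z.add_simpl_r in e.
      assert (0 < T (i+1)%Z j (k+1)%Z) by (apply IH2; par).
      assert (0 < T (i-1)%Z j (k+1)%Z) by (apply IH2; par).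
      assert (0 < T i (j+1)%Z (k+1)%Z) by (apply IH2; par).
      assert (0 < T i (j-1)%Z (k+1)%Z) by (apply IH2; par).
      assert (0 < T i j k) by (apply IH1; par).
      nra. }
  intros k hk. replace k with (Z.of_nat (Z.to_nat k)) by lia. apply A.
Qed.

Lemma Te_m1 t T (htpos : forall i j, 0 < t i j) (hinit : initial_data t T) a b :
  ((a+b) mod 2 = 0)%Z -> Te T a b (-1)%Z = Nf t a b / t a b.
Proof.
  intros h. unfold Te. simpl. unfold Nf.
  rewrite !(lvl0 t T hinit) by par. rewrite (lvl1 t T hinit) by par. reflexivity.
Qed.

Lemma Nf_pos t (htpos : forall i j, 0 < t i j) a b : 0 < Nf t a b.
Proof. unfold Nf. pose proof (htpos (a+1)%Z b). pose proof (htpos (a-1)%Z b).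
  pose proof (htpos a (b+1)%Z). pose proof (htpos a (b-1)%Z).
  apply Rplus_lt_0_compat; apply Rmult_lt_0_compat; auto. Qed.

Lemma Tepos t T (htpos : forall i j, 0 < t i j) (hinit : initial_data t T) (hsys : T_system T) :
  Upos (Te T).
Proof.
  intros i j k hk h. destruct (Z.eq_dec k (-1)) as [->|ne].
  - rewrite (Te_m1 t T htpos hinit) by par. apply Rdiv_lt_0_compat; auto. apply Nf_pos; auto.
  - rewrite Te_eq by lia. apply (Tpos t T htpos hinit hsys); auto. lia.
Qed.

Lemma Tesys t T (htpos : forall i j, 0 < t i j) (hinit : initial_data t T) (hsys : T_system T) :
  Usys (Te T).
Proof.
  intros i j k hk h. destruct (Z.eq_dec k 0) as [->|ne].
  - rewrite !Te_eq by lia. unfold Te. simpl.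
    assert (0 < T i j 1%Z) by (apply (Tpos t T htpos hinit hsys); [lia|par]).
    field. lra.
  - rewrite !Te_eq by lia. apply hsys; auto. lia.
Qed.

Lemma tsh (t : Z -> Z -> R) (ht_2 : forall i j, t (i+2)%Z (j+2)%Z = t i j) (a b a2 b2 : Z) :
  a2 = (a+2)%Z -> b2 = (b+2)%Z -> t a2 b2 = t a b.
Proof. intros -> ->. apply ht_2. Qed.

Lemma Nf_sh t (ht_2 : forall i j, t (i+2)%Z (j+2)%Z = t i j) a b :
  Nf t (a+1)%Z (b+1)%Z = Nf t a b.
Proof.
  unfold Nf. rewrite (tsh t ht_2 a (b-1) (a+1+1) (b+1)) by lia.
  rewrite (tsh t ht_2 (a-1) b (a+1) (b+1+1)) by lia.
  rewrite !Z.add_simpl_r. ring.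
Qed.

Lemma pf_sh t (ht_2 : forall i j, t (i+2)%Z (j+2)%Z = t i j) a b :
  pf t (a+1)%Z (b+1)%Z = pf t a b.
Proof.
  unfold pf. rewrite Nf_sh by auto.
  rewrite (tsh t ht_2 a b (a+1+1) (b+1+1)) by lia. ring.
Qed.

Lemma g_m1 t T (htpos : forall i j, 0 < t i j) (hinit : initial_data t T) a b :
  ((a+b) mod 2 = 0)%Z -> g (Te T) a b (-1)%Z = - pf t a b.
Proof.
  intros h. unfold g, pf. rewrite (Te_m1 t T htpos hinit) by auto.
  rewrite Te_eq by lia. replace (-1+2)%Z with 1%Z by ring.
  rewrite (lvl1 t T hinit) by par.
  rewrite ln_div'; auto. 2: apply Nf_pos; auto. ring.
Qed.

Lemma g_0 t T (htpos : forall i j, 0 < t i j) (hinit : initial_data t T) (hsys : T_system T)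
  (ht_2 : forall i j, t (i+2)%Z (j+2)%Z = t i j) a b :
  ((a+b) mod 2 = 1)%Z -> g (Te T) a b 0%Z = pf t a b.
Proof.
  intros h. unfold g, pf. rewrite !Te_eq by lia. replace (0+2)%Z with (1+1)%Z by ring.
  pose proof (hsys (a+1)%Z (b+1)%Z 1%Z ltac:(lia) ltac:(par)) as e.
  replace (1-1)%Z with 0%Z in e by ring.
  rewrite (lvl0 t T hinit (a+1)) in e by par.
  rewrite !(lvl1 t T hinit) in e by par.
  rewrite (lvl0 t T hinit a b) by par.
  assert (E: T (a+1)%Z (b+1)%Z (1+1)%Z = Nf t a b / t (a+1)%Z (b+1)%Z).
  { rewrite <- (Nf_sh t ht_2 a b). unfold Nf. rewrite <- e. field.
    pose proof (htpos (a+1)%Z (b+1)%Z). lra. }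
  rewrite E, ln_div'; auto. 2: apply Nf_pos; auto. ring.
Qed.

Lemma base_m1 t T (htpos : forall i j, 0 < t i j) (hinit : initial_data t T)
  (ht_2 : forall i j, t (i+2)%Z (j+2)%Z = t i j) : Hdef (Te T) (-1)%Z.
Proof.
  intros i j h.
  rewrite !(g_m1 t T htpos hinit) by par.
  pose proof (pf_sh t ht_2 i (j-1)) as A. pose proof (pf_sh t ht_2 (i-1) j) as B.
  norm. lra.
Qed.

Lemma base_0 t T (htpos : forall i j, 0 < t i j) (hinit : initial_data t T) (hsys : T_system T)
  (ht_2 : forall i j, t (i+2)%Z (j+2)%Z = t i j) : Hdef (Te T) 0%Z.
Proof.
  intros i j h.
  rewrite !(g_0 t T htpos hinit hsys ht_2) by par.
  pose proof (pf_sh t ht_2 i (j-1)) as A. pose proof (pf_sh t ht_2 (i-1) j) as B.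
  norm. lra.
Qed.

Lemma Tshift t T (htpos : forall i j, 0 < t i j) (hinit : initial_data t T) (hsys : T_system T)
  (a b : Z) (hab : ((a+b) mod 2 = 0)%Z)
  (hta : forall i j i2 j2, i2 = (i+a)%Z -> j2 = (j+b)%Z -> t i2 j2 = t i j) :
  forall k, (0 <= k)%Z -> forall i j i2 j2, i2 = (i+a)%Z -> j2 = (j+b)%Z ->
    ((i+j+k) mod 2 = 1)%Z -> T i2 j2 k = T i j k.
Proof.
  set (P := fun k => forall i j i2 j2, i2 = (i+a)%Z -> j2 = (j+b)%Z ->
    ((i+j+k) mod 2 = 1)%Z -> T i2 j2 k = T i j k).
  assert (A : forall n : nat, P (Z.of_nat n) /\ P (Z.of_nat n + 1)%Z).
  { induction n as [|n [IH1 IH2]].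
    - simpl. split; intros i j i2 j2 e1 e2 h.
      + rewrite !(lvl0 t T hinit) by par. auto.
      + rewrite !(lvl1 t T hinit) by par. auto.
    - rewrite Nat2Z.inj_succ. unfold Z.succ. split; [assumption|].
      intros i j i2 j2 e1 e2 h. set (k := Z.of_nat n) in *.
      pose proof (hsys i j (k+1)%Z ltac:(lia) ltac:(par)) as e.
      pose proof (hsys i2 j2 (k+1)%Z ltac:(lia) ltac:(par)) as f.
      rewrite Z.add_simpl_r in e, f.
      rewrite (IH2 (i+1)%Z j (i2+1)%Z j2) in f by par.
      rewrite (IH2 (i-1)%Z j (i2-1)%Z j2) in f by par.
      rewrite (IH2 i (j+1)%Z i2 (j2+1)%Z) in f by par.
      rewrite (IH2 i (j-1)%Z i2 (j2-1)%Z) in f by par.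
      rewrite (IH1 i j i2 j2) in f by par.
      assert (0 < T i j k) by (apply (Tpos t T htpos hinit hsys); [lia|par]).
      rewrite <- e in f. apply Rmult_eq_reg_r in f; auto. lra. }
  intros k hk. replace k with (Z.of_nat (Z.to_nat k)) by lia. apply A.
Qed.

Theorem mainTheorem7 (m : Z) (t : Z -> Z -> R) (T : Z -> Z -> Z -> R)
  (hm : (1 <= m)%Z)
  (htpos : forall i j : Z, 0 < t i j)
  (ht_m : forall i j : Z, t (i + m)%Z (j - m)%Z = t i j)
  (ht_2 : forall i j : Z, t (i + 2)%Z (j + 2)%Z = t i j)
  (hinit : initial_data t T)
  (hsys : T_system T) :
  forall i j k : Z, (1 <= k)%Z -> ((i + j + k) mod 2 = 0)%Z ->
    (Lratio T (i + 2)%Z (j + 2)%Z k = Lratio T i j k /\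
     Lratio T (i + m)%Z (j - m)%Z k = Lratio T i j k /\
     Lratio T (i + 1)%Z (j + 1)%Z (k + 2)%Z = Lratio T i j k) /\
    (Rratio T (i + 2)%Z (j + 2)%Z k = Rratio T i j k /\
     Rratio T (i + m)%Z (j - m)%Z k = Rratio T i j k /\
     Rratio T (i + 1)%Z (j + 1)%Z (k + 2)%Z = Rratio T i j k).
Proof.
  intros i j k hk c.
  pose proof (Tshift t T htpos hinit hsys 2 2 ltac:(par)
    ltac:(intros ? ? ? ? -> ->; apply ht_2)) as S2.
  pose proof (Tshift t T htpos hinit hsys m (-m) ltac:(par)
    ltac:(intros x y ? ? -> ->; replace (y + - m)%Z with (y - m)%Z by ring; apply ht_m)) as Sm.
  pose proof (Lgen (Te T) (Tepos t T htpos hinit hsys) (Tesys t T htpos hinit hsys) k ltac:(lia)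
    (Hall (Te T) (Tepos t T htpos hinit hsys) (Tesys t T htpos hinit hsys)
       (base_m1 t T htpos hinit ht_2) (base_0 t T htpos hinit hsys ht_2) k ltac:(lia)) i j c) as [L1 L2].
  rewrite !Te_eq in L1 by lia. rewrite !Te_eq in L2 by lia.
  unfold Lratio, Rratio.
  split; split; try split; auto.
  - rewrite (S2 k ltac:(lia) (i+1)%Z j (i+2+1)%Z (j+2)%Z) by par.
    rewrite (S2 k ltac:(lia) (i-1)%Z j (i+2-1)%Z (j+2)%Z) by par.
    rewrite (S2 (k+1)%Z ltac:(lia) i j (i+2)%Z (j+2)%Z) by par.
    rewrite (S2 (k-1)%Z ltac:(lia) i j (i+2)%Z (j+2)%Z) by par. reflexivity.
  - rewrite (Sm k ltac:(lia) (i+1)%Z j (i+m+1)%Z (j-m)%Z) by par.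
    rewrite (Sm k ltac:(lia) (i-1)%Z j (i+m-1)%Z (j-m)%Z) by par.
    rewrite (Sm (k+1)%Z ltac:(lia) i j (i+m)%Z (j-m)%Z) by par.
    rewrite (Sm (k-1)%Z ltac:(lia) i j (i+m)%Z (j-m)%Z) by par. reflexivity.
  - rewrite (S2 k ltac:(lia) i (j+1)%Z (i+2)%Z (j+2+1)%Z) by par.
    rewrite (S2 k ltac:(lia) i (j-1)%Z (i+2)%Z (j+2-1)%Z) by par.
    rewrite (S2 (k+1)%Z ltac:(lia) i j (i+2)%Z (j+2)%Z) by par.
    rewrite (S2 (k-1)%Z ltac:(lia) i j (i+2)%Z (j+2)%Z) by par. reflexivity.
  - rewrite (Sm k ltac:(lia) i (j+1)%Z (i+m)%Z (j-m+1)%Z) by par.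
    rewrite (Sm k ltac:(lia) i (j-1)%Z (i+m)%Z (j-m-1)%Z) by par.
    rewrite (Sm (k+1)%Z ltac:(lia) i j (i+m)%Z (j-m)%Z) by par.
    rewrite (Sm (k-1)%Z ltac:(lia) i j (i+m)%Z (j-m)%Z) by par. reflexivity.
Qed.
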